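(* Let $(X,d)$ be a complete metric space and let $T:X\to X$ be a mapping for which there exists $\beta\in[0,\tfrac23)$ such that $$d(Tx,T^2x)+d(T^2x,Ty)+d(Ty,Tx)\le \beta\,[\,d(x,Tx)+d(y,Ty)+d(Tx,T^2x)\,]$$ for all $x,y\in X$ such that $x$, $y$, $Tx$ are pairwise distinct (i.e. $T$ is a generalized orbital triangular Kannan contraction). Suppose that $T$ has no periodic points of prime period $2$. Then $T$ has a fixed point.
   Context: A point $x\in X$ is a periodic point of period $n$ of $T$ if $T^n x=x$; the least positive integer $n$ with $T^nx=x$ is its prime period. Thus ''no periodic points of prime period $2$'' means there is no $x\in X$ with $T^2x=x$ and $Tx\neq x$. *)

(* Defs.v *)
From Stdlib Require Import Reals.
Open Scope R_scope.

Definition is_metric {X : Type} (d : X -> X -> R) : Prop :=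
  (forall x y, 0 <= d x y) /\
  (forall x y, d x y = 0 <-> x = y) /\
  (forall x y, d x y = d y x) /\
  (forall x y z, d x z <= d x y + d y z).

Definition cauchy_seq {X : Type} (d : X -> X -> R) (u : nat -> X) : Prop :=
  forall eps, 0 < eps -> exists N, forall m n, (N <= m)%nat -> (N <= n)%nat ->
    d (u m) (u n) < eps.

Definition converges_to {X : Type} (d : X -> X -> R) (u : nat -> X) (l : X) : Prop :=
  forall eps, 0 < eps -> exists N, forall n, (N <= n)%nat -> d (u n) l < eps.

Definition complete_metric {X : Type} (d : X -> X -> R) : Prop :=
  is_metric d /\
  forall u : nat -> X, cauchy_seq d u -> exists l, converges_to d u l.

Definition gen_orbital_triangular_kannan {X : Type} (d : X -> X -> R)
    (T : X -> X) (beta : R) : Prop :=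
  0 <= beta /\ beta < 2 / 3 /\
  forall x y : X, x <> y -> y <> T x -> x <> T x ->
    d (T x) (T (T x)) + d (T (T x)) (T y) + d (T y) (T x)
      <= beta * (d x (T x) + d y (T y) + d (T x) (T (T x))).

Definition no_prime_period_two {X : Type} (T : X -> X) : Prop :=
  ~ exists x : X, T (T x) = x /\ T x <> x.

(* Main.v *)
Require Import Defs.
From Stdlib Require Import Reals.
From Stdlib Require Import Lra Lia Classical.
Open Scope R_scope.

Fixpoint orb {X : Type} (T : X -> X) (x0 : X) (n : nat) : X :=
  match n with O => x0 | S k => T (orb T x0 k) end.

Theorem theorem4p1 (X : Type) (d : X -> X -> R) (T : X -> X) :
  inhabited X ->
  complete_metric d ->
  (exists beta : R, gen_orbital_triangular_kannan d T beta) ->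
  no_prime_period_two T ->
  exists x : X, T x = x.
Proof.
intros [x0] [Hm Hc] [beta [Hb0 [Hb1 Hk]]] Hnp.
destruct Hm as [d0 [deq [dsym dtri]]].
destruct (classic (exists n, T (orb T x0 n) = orb T x0 n)) as [[n Hn]|Hno].
{ exists (orb T x0 n); exact Hn. }
set (u := orb T x0).
assert (Hne : forall n, T (u n) <> u n) by (intros n H; apply Hno; exists n; exact H).
assert (Hne2 : forall n, T (T (u n)) <> u n).
{ intros n H. apply Hnp. exists (u n). split; auto. }
assert (dz : forall a, d a a = 0) by (intro a; apply deq; reflexivity).
assert (dpos : forall a b, a <> b -> 0 < d a b).
{ intros a b H. destruct (d0 a b) as [H'|H']; auto. exfalso; apply H, deq; auto. }
set (P := fun w => d w (T w) + d (T w) (T (T w)) + d (T (T w)) w).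
set (q := 2*beta/(2-beta)).
assert (Hqe : q*(2-beta) = 2*beta) by (unfold q; field; lra).
assert (Hq0 : 0 <= q) by nra.
assert (Hq1 : q < 1) by nra.
assert (Hstep : forall n, P (u (S n)) <= q * P (u n)).
{ intros n. change (u (S n)) with (T (u n)). set (w := u n).
  assert (H := Hk (T w) w (Hne n) (fun e => Hne2 n (eq_sym e)) (fun e => Hne (S n) (eq_sym e))).
  assert (H1 := dtri (T (T w)) (T w) (T (T (T w)))).
  rewrite (dsym (T (T w)) (T w)) in H1.
  rewrite (dsym (T w) (T (T (T w)))) in H1.

  assert (H2 := d0 (T (T w)) w).
  assert (H3 := d0 (T w) (T (T w))). assert (H4 := d0 (T (T w)) (T (T (T w)))).
  assert (H5 := d0 (T (T (T w))) (T w)). assert (H6 := d0 w (T w)).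
  assert (Hb: beta * d (T (T w)) (T (T (T w))) <= beta * ((d (T w) (T (T w)) + d (T (T w)) (T (T (T w))) + d (T (T (T w))) (T w))/2)).
  { apply Rmult_le_compat_l; lra. }
  assert (Hc2 : beta * (d w (T w) + d (T w) (T (T w))) <= beta * (d w (T w) + d (T w) (T (T w)) + d (T (T w)) w)).
  { apply Rmult_le_compat_l; lra. }
  assert (HL : P (T w) * (2 - beta) <= 2*beta*P w) by (unfold P; lra).
  apply (Rmult_le_reg_r (2-beta)); [lra|]. replace (q * P w * (2 - beta)) with (q * (2 - beta) * P w) by ring. rewrite Hqe. exact HL. }
assert (Ppos : forall n, 0 < d (u n) (u (S n)) /\ d (u n) (u (S n)) <= P (u n)).
{ intro n. change (u (S n)) with (T (u n)). split.
  apply dpos. intro e; apply (Hne n); auto.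
  unfold P. assert (H3 := d0 (T (u n)) (T (T (u n)))). assert (H2 := d0 (T (T (u n))) (u n)). lra. }
assert (Hgeo : forall n, P (u n) <= q^n * P (u O)).
{ induction n. simpl; lra.
  apply Rle_trans with (1 := Hstep n). simpl. rewrite Rmult_assoc.
  apply Rmult_le_compat_l; auto. }
assert (Hdec : forall n, P (u (S n)) < P (u n)).
{ intro n. destruct (Ppos n) as [Pa Pb]. assert (H := Hstep n). nra. }
assert (Hdec2 : forall n k, P (u (n + S k)%nat) < P (u n)).
{ intros n k. induction k. rewrite Nat.add_1_r. apply Hdec.
  rewrite Nat.add_succ_r. apply Rlt_trans with (2 := IHk). apply Hdec. }
assert (Hinj : forall n m, u n = u m -> n = m).
{ intros n m H. destruct (Nat.lt_trichotomy n m) as [Hl|[Hl|Hl]]; auto.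
  - exfalso. destruct m as [|m']; [lia|]. replace (S m') with (n + S (m' - n))%nat in H by lia.
    assert (A := Hdec2 n (m' - n)%nat). rewrite <- H in A. lra.
  - exfalso. destruct n as [|n']; [lia|]. replace (S n') with (m + S (n' - m))%nat in H by lia.
    assert (A := Hdec2 m (n' - m)%nat). rewrite H in A. lra. }
set (P0 := P (u O)).
assert (HP0 : 0 <= P0). { destruct (Ppos O). unfold P0; lra. }
assert (Hdist : forall n k, d (u n) (u (n+k)%nat) * (1-q) <= P0 * (q^n - q^(n+k))).
{ intros n k. induction k.
  - rewrite Nat.add_0_r, dz. lra.
  - rewrite Nat.add_succ_r.
    assert (H1 := dtri (u n) (u (n+k)%nat) (u (S (n+k)))).
    destruct (Ppos (n+k)%nat) as [_ H2]. assert (H3 := Hgeo (n+k)%nat).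
    fold P0 in H3. simpl pow.
    assert (Hqp : 0 <= q^(n+k)) by (apply pow_le; auto).
    assert (A : d (u n) (u (S (n + k))) * (1 - q) <= (d (u n) (u (n + k)%nat) + d (u (n + k)%nat) (u (S (n + k))))*(1-q)).
    { apply Rmult_le_compat_r; lra. }
    assert (B : d (u (n + k)%nat) (u (S (n + k))) * (1-q) <= q ^ (n + k)%nat * P0 * (1-q)).
    { apply Rmult_le_compat_r; lra. }
    nra. }
assert (Hcau : cauchy_seq d u).
{ intros eps Heps.
  set (y := eps*(1-q)/(P0+1)).
  assert (Hy : y*(P0+1) = eps*(1-q)) by (unfold y; field; lra).
  assert (Hy0 : 0 < y). { unfold y. apply Rdiv_lt_0_compat; nra. }
  destruct (pow_lt_1_zero q ltac:(rewrite Rabs_right; lra) y Hy0) as [N HN].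
  exists N. intros m n Hm Hn.
  assert (key : forall a k, (N <= a)%nat -> d (u a) (u (a+k)%nat) < eps).
  { intros a k Ha. assert (H1 := Hdist a k). assert (H2 := HN a Ha).
    rewrite Rabs_right in H2 by (apply Rle_ge, pow_le; auto).
    assert (H3 : 0 <= q^(a+k)%nat) by (apply pow_le; auto).
    assert (H4 : P0 * q^a <= P0 * y) by (apply Rmult_le_compat_l; lra).
    assert (H5 : 0 <= P0 * q^(a+k)%nat) by nra.
    assert (H6 : d (u a) (u (a + k)%nat) * (1 - q) < eps*(1-q)) by nra.
    apply Rmult_lt_reg_r with (1-q); lra. }
  destruct (Nat.le_ge_cases m n) as [H|H].
  - replace n with (m + (n-m))%nat by lia. apply key; auto.
  - rewrite dsym. replace m with (n + (m-n))%nat by lia. apply key; auto. }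
destruct (Hc u Hcau) as [z Hz].
exists z.
destruct (classic (T z = z)) as [E|E]; auto. exfalso.
set (D := d z (T z)).
assert (HD : 0 < D) by (apply dpos; auto).
assert (HN0 : exists N0, forall n, (N0 <= n)%nat -> u n <> z).
{ destruct (classic (exists k, u k = z)) as [[k Hk']|Hnk].
  - exists (S k). intros n Hn e. rewrite <- Hk' in e. apply Hinj in e. lia.
  - exists O. intros n _ e. apply Hnk; eauto. }
destruct HN0 as [N0 HN0].
destruct (Hz (D/15) ltac:(lra)) as [N1 HN1].
set (n := (N0 + N1)%nat).
assert (e0 := HN1 n ltac:(unfold n; lia)).
assert (e1 := HN1 (S n) ltac:(unfold n; lia)).
assert (e2 := HN1 (S (S n)) ltac:(unfold n; lia)).
assert (z0 := HN0 n ltac:(unfold n; lia)).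
assert (z1 := HN0 (S n) ltac:(unfold n; lia)).
assert (H := Hk (u n) z z0 (fun e => z1 (eq_sym e)) (fun e => Hne n (eq_sym e))).
change (T (u n)) with (u (S n)) in H.
change (T (u (S n))) with (u (S (S n))) in H.
fold D in H.
assert (t1 := dtri z (u (S (S n))) (T z)).
assert (t2 := dtri z (u (S n)) (T z)).
assert (t3 := dtri (u n) z (u (S n))).
assert (t4 := dtri (u (S n)) z (u (S (S n)))).
rewrite (dsym z (u (S (S n)))) in t1.
rewrite (dsym z (u (S n))) in t2, t3.
rewrite (dsym (u (S n)) (T z)) in t2.
fold D in t1, t2.
assert (p1 := d0 (u n) (u (S n))). assert (p2 := d0 (u (S n)) (u (S (S n)))).
assert (p3 := d0 z (u (S n))). assert (p4 := d0 (u (S (S n))) z).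
assert (p5 := d0 (u n) z).
assert (b1 : beta * d (u n) (u (S n)) <= 2/3 * d (u n) (u (S n))) by (apply Rmult_le_compat_r; lra).
assert (b2 : beta * d (u (S n)) (u (S (S n))) <= 2/3 * d (u (S n)) (u (S (S n)))) by (apply Rmult_le_compat_r; lra).
assert (b3 : beta * D <= 2/3 * D) by (apply Rmult_le_compat_r; lra).
lra.
Qed.
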